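(* Let $i,j,k\ge 0$. Each permutation of one of the forms $21\ominus(\delta_j\oplus\delta_k)$, $\delta_i\ominus(1\oplus\delta_k)$, or $\delta_i\ominus(\delta_j\oplus 1)$ is shallow.
   Context: For $\pi\in S_n$: $D(\pi)=\sum_{i}|\pi_i-i|$, $I(\pi)$ is the number of inversions, $T(\pi)=n-\mathrm{cyc}(\pi)$ with $\mathrm{cyc}$ the number of cycles in the disjoint cycle decomposition; $\pi$ is shallow if $I(\pi)+T(\pi)=D(\pi)$. $\delta_m=m(m-1)\cdots21\in S_m$ is the decreasing permutation ($\delta_0$ is the empty permutation), and $1$ denotes the permutation of length one. For $\alpha\in S_a$, $\beta\in S_b$, the direct sum $\alpha\oplus\beta\in S_{a+b}$ is $\alpha_1\cdots\alpha_a(\beta_1+a)\cdots(\beta_b+a)$ and the skew sum $\alpha\ominus\beta\in S_{a+b}$ is $(\alpha_1+b)\cdots(\alpha_a+b)\beta_1\cdots\beta_b$. *)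

(* Defs.v *)
(* Permutations of {1..n} are modelled as 'S_n = {perm 'I_n}
   (0-based; all quantities D, I, T are invariant under the shift). *)
From mathcomp Require Import all_boot all_order all_fingroup.
Set Implicit Arguments. Unset Strict Implicit. Unset Printing Implicit Defensive.

Definition Dstat n (p : 'S_n) : nat :=
  \sum_(i : 'I_n) ((p i - i) + (i - p i))%N.

Definition Istat n (p : 'S_n) : nat :=
  #|[set ij : 'I_n * 'I_n | (ij.1 < ij.2)%N && (p ij.2 < p ij.1)%N]|.

Definition Tstat n (p : 'S_n) : nat := (n - #|porbits p|)%N.

Definition shallow n (p : 'S_n) : Prop := (Istat p + Tstat p)%N = Dstat p.

Definition delta m : 'S_m := perm (@rev_ord_inj m).

Definition dsum_fun a b (al : 'S_a) (be : 'S_b) (i : 'I_(a + b)) : 'I_(a + b) :=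
  match split i with
  | inl x => lshift b (al x)
  | inr y => rshift a (be y)
  end.

Lemma dsum_inj a b (al : 'S_a) (be : 'S_b) : injective (dsum_fun al be).
Proof.
move=> i j; rewrite /dsum_fun -[i]splitK -[j]splitK !unsplitK.
case: (split i) => [x|y]; case: (split j) => [x'|y'] /= /eqP;
  rewrite -val_eqE /=.
- by move/eqP/val_inj/perm_inj ->.
- by move=> /eqP E; move: (ltn_ord (al x)); rewrite E ltnNge leq_addr.
- by move=> /eqP E; move: (ltn_ord (al x')); rewrite -E ltnNge leq_addr.
- by rewrite eqn_add2l => /eqP/val_inj/perm_inj ->.
Qed.

Definition dsum a b (al : 'S_a) (be : 'S_b) : 'S_(a + b) := perm (@dsum_inj a b al be).

Definition ssum_fun a b (al : 'S_a) (be : 'S_b) (i : 'I_(a + b)) : 'I_(a + b) :=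
  cast_ord (addnC b a)
  match split i with
  | inl x => rshift b (al x)
  | inr y => lshift a (be y)
  end.

Lemma ssum_inj a b (al : 'S_a) (be : 'S_b) : injective (ssum_fun al be).
Proof.
move=> i j; rewrite /ssum_fun => /cast_ord_inj.
rewrite -[i]splitK -[j]splitK !unsplitK.
case: (split i) => [x|y]; case: (split j) => [x'|y'] /= /eqP;
  rewrite -val_eqE /=.
- by rewrite eqn_add2l => /eqP/val_inj/perm_inj ->.
- by move=> /eqP E; move: (ltn_ord (be y')); rewrite -E ltnNge leq_addr.
- by move=> /eqP E; move: (ltn_ord (be y)); rewrite E ltnNge leq_addr.
- by move/eqP/val_inj/perm_inj ->.
Qed.

Definition ssum a b (al : 'S_a) (be : 'S_b) : 'S_(a + b) := perm (@ssum_inj a b al be).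

(* Main.v *)
Require Import Defs.
From mathcomp Require Import all_boot all_order all_fingroup.
From mathcomp Require Import zify.
Set Implicit Arguments. Unset Strict Implicit. Unset Printing Implicit Defensive.

Definition SH n (f : nat -> nat) :=
  forall p : 'S_n, (forall x : 'I_n, val (p x) = f x) -> shallow p.

Definition swapf (f : nat -> nat) a b x :=
  if x == a then f b else if x == b then f a else f x.

Lemma SH_ext n f g : (forall x, x < n -> f x = g x) -> SH n g -> SH n f.
Proof. by move=> e H p Hp; apply: H => x; rewrite Hp e. Qed.

Lemma Istat_sum n (p : 'S_n) :
  Istat p = \sum_(x : 'I_n) \sum_(y : 'I_n) ((x < y) && (p y < p x) : nat).
Proof.
rewrite /Istat -sum1_card pair_big /= big_mkcond /=.
by apply: eq_bigr => [[x y]] _; rewrite inE /=; case: ifP.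
Qed.

Lemma sum_range n c d :
  \sum_(x < n) ((c <= x) && (x < d) : nat) = minn d n - minn c n.
Proof.
elim: n => [|n IH]; first by rewrite big_ord0 !minn0.
rewrite big_ord_recr /= IH; lia.
Qed.

Lemma sum_single n (a : nat) (g : nat) : a < n ->
  \sum_(x < n) ((val x == a) * g) = g.
Proof.
move=> an; rewrite (bigD1 (Ordinal an)) //= eqxx mul1n big1 ?addn0 //.
move=> x /eqP xa; case: eqP => // e; case: xa; exact: val_inj.
Qed.

Lemma sum2 n (F : 'I_n -> nat) A B : A != B ->
  \sum_i F i = F A + F B + \sum_(i | (i != A) && (i != B)) F i.
Proof. by move=> AB; rewrite (bigD1 A) //= (bigD1 B) 1?eq_sym //= addnA. Qed.

Lemma card_porbits_le n (p : 'S_n) : #|porbits p| <= n.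
Proof. by rewrite -[X in _ <= X]card_ord leq_imset_card. Qed.

Lemma SH_id n : SH n id.
Proof.
move=> p Hp.
have -> : p = 1%g by apply/permP => x; rewrite perm1; apply: val_inj; rewrite Hp.
rewrite /shallow Istat_sum /Tstat /Dstat.
rewrite big1 ?add0n; last first.
  by move=> x _; rewrite big1 // => y _; rewrite !perm1; lia.
rewrite [X in _ = X]big1; last by move=> x _; rewrite perm1 subnn.
have -> : #|porbits (1%g : 'S_n)| = n; last by rewrite subnn.
rewrite card_imset ?card_ord // => x y E.
have : y \in porbit 1%g x by rewrite E porbit_id.
by case/porbitP => i ->; rewrite expg1n perm1.
Qed.

Lemma pw_nat (f : nat -> nat) a b X Y : a < b -> f b <= a -> b <= f a ->
  (forall c, a < c < b -> f b < f c < f a) ->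
  (f X = f Y -> X = Y) -> (f X = f a -> X = a) -> (f X = f b -> X = b) ->
  (f Y = f a -> Y = a) -> (f Y = f b -> Y = b) ->
  ((X < Y) && (f Y < f X) : nat) =
     (((if X == a then b else if X == b then a else X) <
       (if Y == a then b else if Y == b then a else Y)) && (f Y < f X) : nat)
     + (X == a) * ((a < Y) && (Y < b.+1))
        + ((a.+1 <= X) && (X < b)) * (Y == b).
Proof.
move=> ab fba bfa win hxy hxa hxb hya hyb.
have wx := win X; have wy := win Y.
move: hxy hxa hxb hya hyb wx wy.
case: (eqVneq X a) => [->|nxa]; case: (eqVneq Y a) => [->|nya];
try (case: (eqVneq X b) => [->|nxb]); try (case: (eqVneq Y b) => [->|nyb]);
rewrite ?eqxx /=; lia.
Qed.

Lemma step n f (a b : nat) : a < b -> b < n -> f b <= a ->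
  b <= f a -> (forall c, a < c < b -> f b < f c < f a) ->
  (f b = a \/ f a = b) -> SH n (swapf f a b) -> SH n f.
Proof.
move=> ab bn fba bfa win cyc H p Hp.
have an : a < n by apply: ltn_trans bn.
pose A := Ordinal an; pose B := Ordinal bn.
pose t := tperm A B.
pose s := (t * p)%g.
have AB : A != B by rewrite -val_eqE /=; lia.
have tv : forall x : 'I_n, val (t x) = if val x == a then b else if val x == b then a else val x.
  move=> x; rewrite /t; case: tpermP => [->|->|xA xB] /=; rewrite ?eqxx //.
    by case: ifP => //; lia.
  case: eqP => [e|_]; first by case: xA; apply: val_inj.
  by case: eqP => [e|_] //; case: xB; apply: val_inj.
have Hs : forall x : 'I_n, val (s x) = swapf f a b x.
  move=> x; rewrite permM Hp tv /swapf.
  by case: eqP => // _; case: eqP.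
have := H s Hs; rewrite /shallow => Es.
have ED : Dstat p = Dstat s + 2 * (b - a).
  rewrite /Dstat (sum2 (fun i => p i - i + (i - p i)) AB).
  rewrite (sum2 (fun i => s i - i + (i - s i)) AB).
  have -> : \sum_(i | (i != A) && (i != B)) (s i - i + (i - s i)) =
            \sum_(i | (i != A) && (i != B)) (p i - i + (i - p i)).
    apply: eq_bigr => i /andP[iA iB]; rewrite permM /t tpermD //.
      by rewrite eq_sym.
    by rewrite eq_sym.
  rewrite !Hs !Hp /swapf /= eqxx.
  have -> : (b == a) = false by lia.
  rewrite eqxx; lia.
have ET : Tstat p = Tstat s + 1.
  rewrite /Tstat.
  have mem : A \in porbit p B.
    case: cyc => [e|e].
      have -> : A = (p ^+ 1)%g B by rewrite expg1; apply: val_inj; rewrite Hp.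
      exact: mem_porbit.
    rewrite porbit_sym.
    have -> : B = (p ^+ 1)%g A by rewrite expg1; apply: val_inj; rewrite Hp.
    exact: mem_porbit.
  have := porbits_mul_tperm p A B; rewrite /= mem AB /= addn0 => E.
  have := card_porbits_le s; rewrite /s /t; move=> LE.
  rewrite E in LE *; lia.
have EI : Istat p + 1 = Istat s + 2 * (b - a).
  rewrite !Istat_sum.
  have -> : \sum_(x : 'I_n) \sum_(y : 'I_n) ((x < y) && (s y < s x) : nat) =
     \sum_(x : 'I_n) \sum_(y : 'I_n) ((t x < t y) && (p y < p x) : nat).
    rewrite (reindex_inj (@perm_inj _ t)); apply: eq_bigr => x _.
    rewrite (reindex_inj (@perm_inj _ t)); apply: eq_bigr => y _.
    rewrite /s !permM !tpermK. reflexivity.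
  have pw : forall x y : 'I_n, ((x < y) && (p y < p x) : nat) =
     ((t x < t y) && (p y < p x) : nat) + (val x == a) * ((a < y) && (y < b.+1))
        + ((a.+1 <= x) && (x < b)) * (val y == b).
    move=> x y.
    have injf : forall u v : 'I_n, f u = f v -> val u = val v.
      by move=> u v; rewrite -!Hp => /val_inj/perm_inj ->.
    rewrite !tv !Hp; apply: pw_nat => //.
    - exact: injf x y.
    - exact: injf x A.
    - exact: injf x B.
    - exact: injf y A.
    - exact: injf y B.
  have -> : \sum_(x : 'I_n) \sum_(y : 'I_n) ((x < y) && (p y < p x) : nat) =
     \sum_(x : 'I_n) \sum_(y : 'I_n) ((t x < t y) && (p y < p x) : nat)
     + \sum_(x : 'I_n) \sum_(y : 'I_n) ((val x == a) * ((a.+1 <= y) && (y < b.+1)))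
     + \sum_(x : 'I_n) \sum_(y : 'I_n) (((a.+1 <= x) && (x < b)) * (val y == b)).
    rewrite -!big_split /=; apply: eq_bigr => x _; rewrite -!big_split.
    by apply: eq_bigr => y _; exact: pw.
  have -> : \sum_(x : 'I_n) \sum_(y : 'I_n) ((val x == a) * ((a.+1 <= y) && (y < b.+1))) = b - a.
    under eq_bigr do rewrite -big_distrr.
    rewrite sum_single // sum_range; lia.
  have -> : \sum_(x : 'I_n) \sum_(y : 'I_n) (((a.+1 <= x) && (x < b)) * (val y == b)) = b - a - 1.
    under eq_bigr do rewrite -big_distrr /=.
    have -> : \sum_(y : 'I_n) (val y == b : nat) = 1.
      by rewrite -(sum_single 1 bn); apply: eq_bigr => y _; rewrite muln1.
    under eq_bigr do rewrite muln1.
    rewrite sum_range; lia.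
  lia.
lia.
Qed.

Ltac ifs := repeat (match goal with |- context [if ?c then _ else _] => let H := fresh in destruct c eqn:H end; try (exfalso; lia)).

Lemma revblock n m : forall p f, p + m <= n ->
  (forall x, p <= x < p + m -> f x = 2 * p + m - 1 - x) ->
  SH n (fun x => if (p <= x) && (x < p + m) then x else f x) -> SH n f.
Proof.
elim/ltn_ind: m => m IH p f hpm hf H.
case: (ltnP m 2) => hm.
  apply: SH_ext H => x _; move: (hf x); ifs; lia.
apply: (@step n f p (p + m - 1)).
- lia.
- lia.
- move: (hf (p + m - 1)); lia.
- move: (hf p); lia.
- move=> c hc; move: (hf c) (hf p) (hf (p + m - 1)); lia.
- left; move: (hf (p + m - 1)); lia.
apply: (IH (m - 2) _ (p + 1)).
- lia.
- lia.
- move=> x hx; rewrite /swapf; move: (hf x); ifs; lia.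
apply: SH_ext H => x _; rewrite /swapf.
move: (hf x) (hf p) (hf (p + m - 1)); ifs; lia.
Qed.

Ltac ar := intros; rewrite /swapf; cbv beta; ifs; lia.

Lemma SH_id' n f : (forall x, x < n -> f x = x) -> SH n f.
Proof. by move=> e; apply: SH_ext e (@SH_id n). Qed.

Definition f3 p i j x :=
  if x < p then x else if x < p + i then p + (i + j) - (x - p)
  else if x < p + i + j then p + (i + j - 1) - (x - p)
  else if x == p + i + j then p + j else x.

Lemma F3 i : forall j p n, n = 2 * p + i + j + 1 -> SH n (f3 p i j).
Proof.
elim: i => [|i IH] j p n hn.
  apply: (@revblock n j p); rewrite /f3; [lia|ar|].
  apply: SH_id'; rewrite /f3; ar.
move: hn; case: j => [|j] hn.
  apply: (@revblock n (i + 2) p); rewrite /f3; [lia|ar|].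
  apply: SH_id'; rewrite /f3; ar.
apply: (@step n _ p (p + i + j + 1)); rewrite /f3; try ar.
apply: (@step n _ (p + i + j + 1) (p + i + j + 2)); rewrite /f3; try ar.
apply: (SH_ext _ (IH j (p + 1) n _)); [rewrite /f3; ar | lia].
Qed.

Definition f2 p i k x :=
  if x < p then x else if x < p + i then p + (i + k) - (x - p)
  else if x == p + i then p
  else if x < p + i + k + 1 then p + (i + k + 1) - (x - p) else x.

Lemma F2 i : forall k p n, n = 2 * p + i + k + 1 -> SH n (f2 p i k).
Proof.
elim: i => [|i IH] k p n hn.
  apply: (@revblock n k (p + 1)); rewrite /f2; [lia|ar|].
  apply: SH_id'; rewrite /f2; ar.
move: hn; case: k => [|k] hn.
  apply: (@revblock n (i + 2) p); rewrite /f2; [lia|ar|].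
  apply: SH_id'; rewrite /f2; ar.
apply: (@step n _ p (p + i + 1)); rewrite /f2; try ar.
apply: (@step n _ (p + i + 1) (p + i + k + 2)); rewrite /f2; try ar.
apply: (SH_ext _ (IH k (p + 1) n _)); [rewrite /f2; ar | lia].
Qed.

Definition g1 p k x :=
  if x < p then x else if x == p then p + k else if x == p + 1 then p + k + 1
  else if x < p + k + 2 then 2 * p + k + 1 - x else x.

Lemma G1 k p n : p + k + 2 <= n -> SH n (g1 p k).
Proof.
move=> hn; case: k hn => [|k] hn.
  apply: SH_id'; rewrite /g1; ar.
apply: (@step n _ (p + 1) (p + k + 2)); rewrite /g1; try ar.
apply: (@step n _ p (p + 1)); rewrite /g1; try ar.
apply: (@revblock n (k + 1) (p + 1)); [lia|ar|].
apply: SH_id'; ar.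
Qed.

Definition f1 j k x :=
  if x < 2 then j + k + 1 - x else if x < j + 2 then j + 1 - x
  else if x < j + k + 2 then 2 * j + k + 1 - x else x.

Lemma F1 j k : SH (2 + (j + k)) (f1 j k).
Proof.
case: j => [|[|j]].
- apply: (@revblock _ (k + 2) 0); rewrite /f1; [lia|ar|].
  apply: SH_id'; ar.
- apply: (@step _ _ 0 2); rewrite /f1; try ar.
  apply: (SH_ext _ (@G1 k 1 _ _)); [rewrite /g1; ar | lia].
- apply: (@step _ _ 0 (j + 3)); rewrite /f1; try ar.
  apply: (@step _ _ 1 (j + 2)); try ar.
  apply: (@revblock _ j 2); [lia|ar|].
  apply: (SH_ext _ (@G1 k (j + 2) _ _)); [rewrite /g1; ar | lia].
Qed.

Lemma val_delta m (x : 'I_m) : val (delta m x) = m - 1 - x.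
Proof. rewrite /delta permE /=; lia. Qed.

Lemma val_dsum a b (al : 'S_a) (be : 'S_b) fa fb :
  (forall y : 'I_a, val (al y) = fa (val y)) -> (forall y : 'I_b, val (be y) = fb (val y)) ->
  forall x : 'I_(a + b), val (dsum al be x) = if x < a then fa x else a + fb (x - a).
Proof.
move=> ha hb x; rewrite /dsum permE /dsum_fun.
case: splitP => [y e|y e] /=; rewrite e.
  exact: ha.
by rewrite hb addKn.
Qed.

Lemma val_ssum a b (al : 'S_a) (be : 'S_b) fa fb :
  (forall y : 'I_a, val (al y) = fa (val y)) -> (forall y : 'I_b, val (be y) = fb (val y)) ->
  forall x : 'I_(a + b), val (ssum al be x) = (fun y => if y < a then b + fa y else fb (y - a)) (val x).
Proof.
move=> ha hb x; rewrite /ssum permE /ssum_fun /=.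
case: splitP => [y e|y e] /=; rewrite e.
  by rewrite ha.
by rewrite hb addKn.
Qed.

Lemma SH_ssum a b (al : 'S_a) (be : 'S_b) (fa fb g : nat -> nat) :
  (forall y : 'I_a, val (al y) = fa (val y)) -> (forall y : 'I_b, val (be y) = fb (val y)) ->
  (forall x, x < a + b -> (if x < a then b + fa x else fb (x - a)) = g x) ->
  SH (a + b) g -> shallow (ssum al be).
Proof.
move=> ha hb e H; apply: (SH_ext e H) => x.
exact: (val_ssum ha hb x).
Qed.

Unset Implicit Arguments.

Theorem lemma4p2 (i j k : nat) :
  shallow (ssum (delta 2) (dsum (delta j) (delta k))) /\
  shallow (ssum (delta i) (dsum (delta 1) (delta k))) /\
  shallow (ssum (delta i) (dsum (delta j) (delta 1))).
Proof.
split; [|split].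
- apply: (@SH_ssum _ _ _ _ (fun y => 2 - 1 - y) (fun y => if y < j then j - 1 - y else j + (k - 1 - (y - j))) _ (@val_delta 2) (@val_dsum j k _ _ (fun y => j - 1 - y) (fun y => k - 1 - y) (@val_delta j) (@val_delta k)) _ (@F1 j k)).
  rewrite /f1; ar.
- apply: (@SH_ssum _ _ _ _ (fun y => i - 1 - y) (fun y => if y < 1 then 1 - 1 - y else 1 + (k - 1 - (y - 1))) _ (@val_delta i) (@val_dsum 1 k _ _ (fun y => 1 - 1 - y) (fun y => k - 1 - y) (@val_delta 1) (@val_delta k)) _ (@F2 i k 0 (i + (1 + k)) _)); last lia.
  rewrite /f2; ar.
- apply: (@SH_ssum _ _ _ _ (fun y => i - 1 - y) (fun y => if y < j then j - 1 - y else j + (1 - 1 - (y - j))) _ (@val_delta i) (@val_dsum j 1 _ _ (fun y => j - 1 - y) (fun y => 1 - 1 - y) (@val_delta j) (@val_delta 1)) _ (@F3 i j 0 (i + (j + 1)) _)); last lia.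
  rewrite /f3; ar.
Qed.
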